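(* Let $n\ge2$, $c_1,\dots,c_{n-1}\ge0$, and for $p=1,\dots,n-1$ let $r_p\ge0$ be the largest non-negative real root of $x\mapsto Q_p(x,1)$, where $Q_p(x,y)=\frac{x^p}{p!}-\sum_{k=1}^{p}\frac{c_k}{(p-k)!}x^{p-k}y^k$. Then for each $p=1,\dots,n-2$ we have $r_p\le r_{p+1}$, with strict inequality $r_p<r_{p+1}$ whenever $r_{p+1}>0$. Equivalently, for Kähler classes $\alpha,\beta$ and factor classes $\tau_p(\alpha,\beta)=\alpha-r_p\beta$, the class $\tau_p(\alpha,\beta)-\tau_{p+1}(\alpha,\beta)$ is a non-negative multiple of $\beta$, and a strictly positive multiple whenever $\tau_{p+1}(\alpha,\beta)\ne\alpha$.
   Context: $Q_p(x,y)$ is the homogeneous degree-$p$ part of $\exp(x)(1-P(y))$ with $P(y)=\sum_{k=1}^{n-1}c_ky^k$. It factors as $(x-r_py)\tilde Q_p(x,y)$ with $\tilde Q_p$ having non-negative coefficients; $\tau_p(\alpha,\beta):=\alpha-r_p\beta$ is the factor class at dimension $p$. *)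

(* Defs.v *)
From HB Require Import structures.
From mathcomp Require Import all_boot all_order all_algebra.
Set Implicit Arguments. Unset Strict Implicit. Unset Printing Implicit Defensive.
Import Order.TTheory GRing.Theory Num.Theory.
Local Open Scope ring_scope.

Definition Qp1 (R : rcfType) (c : nat -> R) (p : nat) (x : R) : R :=
  x ^+ p / (p`!)%:R - \sum_(1 <= k < p.+1) c k / ((p - k)`!)%:R * x ^+ (p - k).

Definition largest_nonneg_root (R : rcfType) (f : R -> R) (r : R) : Prop :=
  [/\ 0 <= r, f r = 0 & forall x, 0 <= x -> f x = 0 -> x <= r].

(* Main.v *)
Require Import Defs.
From HB Require Import structures.
From mathcomp Require Import all_boot all_order all_algebra.
From mathcomp Require Import ring lra zify.
Import Order.TTheory GRing.Theory Num.Theory.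
Local Open Scope ring_scope.

Lemma term_le (R : rcfType) (p k : nat) (z : R) : 0 <= z -> (1 <= k < p.+1)%N ->
  z / ((p - k)`!)%:R * (1 + (p.+1)%:R^-1) <= (p.+1)%:R * (z / ((p.+1 - k)`!)%:R).
Proof.
move=> z0 /andP[k1 kp].
rewrite subSn // factS natrM.
set f : R := ((p - k)`!)%:R.
have f0 : 0 < f by rewrite ltr0n fact_gt0.
set J : R := ((p - k).+1)%:R.
set m : R := (p.+1)%:R.
have m0 : 0 < m by rewrite ltr0n.
have J0 : 0 < J by rewrite ltr0n.
have Jm : J <= m - 1.
  have -> : m - 1 = p%:R by rewrite /m -natr1 addrK.
  rewrite /J ler_nat; lia.
set u := m^-1.
have um : u * m = 1 by rewrite mulVf // gt_eqF.
have u0 : 0 <= u by rewrite invr_ge0 ltW.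
have key : (1 + u) * J <= m by nra.
rewrite invfM.
have -> : m * (z * (J^-1 * f^-1)) = (z / f) * (m / J).
    by field; apply/andP; split; rewrite ?(addrC 1) ?natr1 pnatr_eq0 -lt0n ?fact_gt0.
apply: ler_wpM2l; first by rewrite divr_ge0 // ltW.
by rewrite ler_pdivlMr // mulrC.
Qed.

Lemma key (R : rcfType) (c : nat -> R) (p : nat) (x : R) : 0 <= x ->
  (forall k, (1 <= k <= p.+1)%N -> 0 <= c k) ->
  (p.+1)%:R * Qp1 c p.+1 x <=
  x * Qp1 c p x - x / (p.+1)%:R * (x ^+ p / (p`!)%:R - Qp1 c p x).
Proof.
move=> x0 c0.
rewrite /Qp1 big_nat_recr //= subnn fact0 expr0 divr1 mulr1.
set A := \sum_(1 <= i < p.+1) _.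
set B := \sum_(1 <= i < p.+1) _.
set m : R := (p.+1)%:R.
have hxB : x * B = \sum_(1 <= i < p.+1) c i / ((p - i)`!)%:R * x ^+ (p.+1 - i).
  rewrite /B mulr_sumr; apply: eq_big_nat => i /andP[_ hi].
  by rewrite subSn // exprS; ring.
have hA : x * B * (1 + m^-1) <= m * A.
  rewrite hxB mulr_suml /A mulr_sumr; apply: ler_sum_nat => i hi.
  rewrite ![c i / _ * _]mulrAC; apply: term_le => //.
  rewrite mulr_ge0 ?exprn_ge0 // c0 //; case/andP: hi => -> /=; lia.
have hL : m * (x ^+ p.+1 / ((p.+1)`!)%:R) = x * (x ^+ p / (p`!)%:R).
  rewrite factS natrM /m exprS; field.
  by apply/andP; split; rewrite ?(addrC 1) ?natr1 pnatr_eq0 -lt0n ?fact_gt0.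
have hc : 0 <= c p.+1 by apply: c0; rewrite ltnSn andbT.
have m0 : 0 < m by rewrite ltr0n.
rewrite mulrBr hL mulrDr.
have e : x * (x ^+ p / (p`!)%:R - B) - x / m * (x ^+ p / (p`!)%:R - (x ^+ p / (p`!)%:R - B))
  = x * (x ^+ p / (p`!)%:R) - x * B * (1 + m^-1) by ring.
rewrite e lerD2l lerN2.
apply: (le_trans hA); rewrite lerDl mulr_ge0 // ltW.
Qed.

Lemma Qpoly (R : rcfType) (c : nat -> R) (p : nat) :
  exists P : {poly R}, forall x, P.[x] = Qp1 c p x.
Proof.
exists (((p`!)%:R)^-1 *: 'X^p - \sum_(1 <= k < p.+1) (c k / ((p - k)`!)%:R) *: 'X^(p - k)).
move=> x; rewrite hornerD hornerN hornerZ hornerXn horner_sum /Qp1 mulrC.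
congr (_ - _); apply: eq_bigr => k _; by rewrite hornerZ hornerXn.
Qed.

Lemma bound (R : rcfType) (c : nat -> R) (p : nat) (y : R) :
  (forall k, (1 <= k <= p.+1)%N -> 0 <= c k) ->
  exists2 b, y <= b & 0 <= Qp1 c p.+1 b.
Proof.
move=> c0.
set S := \sum_(1 <= k < p.+2) c k / ((p.+1 - k)`!)%:R.
set F : R := ((p.+1)`!)%:R.
have F0 : 0 < F by rewrite ltr0n fact_gt0.
have S0 : 0 <= S.
  have : \sum_(1 <= k < p.+2) (0:R) <= S.
    apply: ler_sum_nat => k hk; rewrite divr_ge0 ?ler0n // c0 //; lia.
  by rewrite big1_eq.
set b := 1 + `|y| + F * S.
have FS0 : 0 <= F * S by rewrite mulr_ge0 // ltW.
have b1 : 1 <= b by rewrite /b -addrA lerDl addr_ge0.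
have bS : F * S <= b by rewrite /b lerDr addr_ge0.
exists b; first by rewrite /b -addrA (addrC 1) -addrA (le_trans (ler_norm y)) // lerDl addr_ge0.
have h1 : \sum_(1 <= k < p.+2) c k / ((p.+1 - k)`!)%:R * b ^+ (p.+1 - k)
        <= \sum_(1 <= k < p.+2) c k / ((p.+1 - k)`!)%:R * b ^+ p.
  apply: ler_sum_nat => k hk; apply: ler_wpM2l.
    rewrite divr_ge0 ?ler0n // c0 //; lia.
  apply: ler_weXn2l => //; lia.
rewrite /Qp1 subr_ge0 (le_trans h1) // -mulr_suml -/S exprS mulrAC.
apply: ler_wpM2r; first by rewrite exprn_ge0 // (le_trans ler01 b1).
by rewrite ler_pdivlMr // mulrC.
Qed.

Theorem lemma5p4 (R : rcfType) (n : nat) (c : nat -> R) (r : nat -> R) :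
  (2 <= n)%N ->
  (forall k, (1 <= k <= n.-1)%N -> 0 <= c k) ->
  (forall p, (1 <= p <= n.-1)%N -> largest_nonneg_root (Qp1 c p) (r p)) ->
  forall p, (1 <= p <= n.-2)%N ->
    r p <= r p.+1 /\ (0 < r p.+1 -> r p < r p.+1).
Proof.
move=> n2 c0 hr p /andP[p1 pn].
have hp : (1 <= p <= n.-1)%N by apply/andP; split => //; lia.
have hp1 : (1 <= p.+1 <= n.-1)%N by apply/andP; split => //; lia.
case: (hr p hp) => [rp0 Qrp rpmax]; case: (hr p.+1 hp1) => [rq0 Qrq rqmax].
have c0' : forall k, (1 <= k <= p.+1)%N -> 0 <= c k.
  move=> k /andP[k1 kp]; apply: c0; apply/andP; split => //; lia.
have [rp_le0|rp_gt0] := leP (r p) 0.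
  have -> : r p = 0 by apply/eqP; rewrite eq_le rp_le0 rp0.
  by split.
have Qneg : Qp1 c p.+1 (r p) < 0.
  have := @key _ c p (r p) (ltW rp_gt0) c0'; rewrite Qrp mulr0 subr0 sub0r => hk.
  have pos : 0 < r p / (p.+1)%:R * (r p ^+ p / (p`!)%:R).
    by rewrite mulr_gt0 ?divr_gt0 ?exprn_gt0 ?ltr0n ?fact_gt0.
  have : (p.+1)%:R * Qp1 c p.+1 (r p) < 0.
    by apply: (le_lt_trans hk); rewrite oppr_lt0.
  by rewrite pmulr_rlt0 ?ltr0n.
have [b rpb Qb] := @bound _ c p (r p) c0'.
have [P hP] := @Qpoly _ c p.+1.
have [x /andP[rpx xb] rx] : exists2 x, r p <= x <= b & root P x.
  by apply: poly_ivt => //; rewrite !hP Qb (ltW Qneg).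
have Qx : Qp1 c p.+1 x = 0 by rewrite -hP; apply/eqP.
have x0 : 0 <= x by apply: le_trans rpx.
have xle := rqmax x x0 Qx.
have rpltx : r p < x.
  rewrite lt_neqAle rpx andbT; apply/eqP => e.
  by move: Qneg; rewrite e Qx ltxx.
split; first exact: ltW (lt_le_trans rpltx xle).
by move=> _; exact: lt_le_trans rpltx xle.
Qed.
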